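(* Assume the standing hypotheses (H). Let $t$ be an integer with $t\ge k_3/3$. Let $A$ be a part of $G$ with $|A|=4$, let $\{u,v\}\subseteq A$ be a good pair for $A$, and let $\{y,z\}=A\setminus\{u,v\}$. Then \[\bigl|(L(u)\cap L(v))\cup L(y)\cup L(z)\bigr|\ \ge\ n-t-k_4 .\]
   Context: A list assignment $L$ assigns to each vertex $v$ a set $L(v)$ of colors; an $L$-coloring is a proper coloring $f$ with $f(v)\in L(v)$ for all $v$; $\mathrm{ch}$ denotes choice number and $\chi$ chromatic number. A part of a complete multipartite graph is one of its maximal stable sets. Standing hypotheses (H): $k\ge1$ and $n\ge 2k+2$ are integers; $G$ is a complete $k$-partite graph (exactly $k$ nonempty parts) on $n$ vertices; $L$ is a list assignment for $G$ with $|L(v)|\ge\lceil (n+k-1)/3\rceil$ for every vertex $v$; $G$ has no $L$-coloring; $\left|\bigcup_{v\in V(G)}L(v)\right|\le n-1$; and every graph $H$ with fewer than $n$ vertices satisfies $\mathrm{ch}(H)\le\max\{\chi(H),\lceil(|V(H)|+\chi(H)-1)/3\rceil\}$. For $i\in\{1,2,3,4\}$, $k_i$ denotes the number of parts of $G$ of size $i$. For a part $A$ with $|A|\ge3$, a pair $\{u,v\}\subseteq A$ of distinct vertices is a good pair for $A$ if either $|A|=3$ and $|L(u)\cap L(v)|\ge\frac{k_1+k_4+1}{3}$, or $|A|=4$ and $|L(u)\cap L(v)|\ge|L(w)\cap L(z)|$ where $\{w,z\}=A\setminus\{u,v\}$. *)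

(* Defs.v *)
From mathcomp Require Import all_boot.
Set Implicit Arguments. Unset Strict Implicit. Unset Printing Implicit Defensive.

(* A (simple) graph on a finite vertex type T is a symmetric irreflexive
   relation e : rel T. *)

Definition colorableb (T : finType) (e : rel T) (c : nat) : bool :=
  [exists f : {ffun T -> 'I_c}, [forall x, [forall y, e x y ==> (f x != f y)]]].

(* chromatic number: least c <= #|T| such that e is c-colourable
   (for loopless graphs such a c always exists, so this is chi). *)
Definition chi (T : finType) (e : rel T) : nat :=
  \big[minn/#|T|]_(c < #|T|.+1 | colorableb e c) (c : nat).

Definition L_coloring (T C : finType) (e : rel T) (L : T -> {set C}) (f : T -> C) : Prop :=
  (forall v, f v \in L v) /\ (forall x y, e x y -> f x != f y).

Definition choosable (T : finType) (e : rel T) (c : nat) : Prop :=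
  forall (C : finType) (L : T -> {set C}),
    (forall v, c <= #|L v|) -> exists f : T -> C, L_coloring e L f.

Definition cdiv3 (a : nat) : nat := (a + 2) %/ 3.

Definition kpart_rel (T : finType) (k : nat) (p : T -> 'I_k) : rel T :=
  fun x y => p x != p y.

Definition part (T : finType) (k : nat) (p : T -> 'I_k) (a : 'I_k) : {set T} :=
  [set x | p x == a].

Definition nparts (T : finType) (k : nat) (p : T -> 'I_k) (j : nat) : nat :=
  #|[set a : 'I_k | #|part p a| == j]|.

(* Main.v *)
Require Import Defs.
From mathcomp Require Import all_boot zify.

Lemma bigmin_le_seq (I : eqType) (s : seq I) (P : pred I) (F : I -> nat) x i0 :
  i0 \in s -> P i0 -> \big[minn/x]_(i <- s | P i) F i <= F i0.
Proof.
elim: s => [|j s IH] //=; rewrite inE big_cons => /orP[/eqP<-|hs] hP.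
  by rewrite hP geq_minl.
case: (P j); last exact: IH.
by rewrite geq_min IH ?orbT.
Qed.

Lemma chi_le (T : finType) (e : rel T) (c : nat) : colorableb e c -> chi e <= c.
Proof.
move=> hc; rewrite /chi.
case: (leqP c #|T|) => hcT.
  have hi : c < #|T|.+1 by [].
  by apply: (@bigmin_le_seq _ _ _ _ _ (Ordinal hi)) => //; exact: mem_index_enum.
apply: leq_trans (ltnW hcT).
apply: (big_ind (fun x => x <= #|T|)) => //.
  by move=> x y hx hy; rewrite geq_min hx.
by move=> i _; rewrite -ltnS.
Qed.

Lemma cdiv3_mono a b : a <= b -> cdiv3 a <= cdiv3 b.
Proof. by move=> h; rewrite /cdiv3 leq_div2r // leq_add2r. Qed.

Lemma cdiv3_3 a : cdiv3 (a + 3) = (cdiv3 a).+1.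
Proof. rewrite /cdiv3. lia. Qed.

Lemma cdiv3_ge a : a <= 3 * cdiv3 a.
Proof. rewrite /cdiv3. lia. Qed.

Lemma no_triple (k n : nat) (T : finType) (p : T -> 'I_k) (C : finType) (L : T -> {set C})
  (hk : 1 <= k) (hn : 2 * k + 2 <= n) (hT : #|T| = n)
  (hL : forall v, cdiv3 (n + k - 1) <= #|L v|)
  (hnocol : ~ exists f : T -> C, L_coloring (kpart_rel p) L f)
  (hmin : forall (m : nat) (e : rel 'I_m), m < n -> symmetric e -> irreflexive e ->
            choosable e (maxn (chi e) (cdiv3 (m + chi e - 1))))
  (x1 x2 x3 : T) (col : C) :
  uniq [:: x1; x2; x3] -> p x1 = p x2 -> p x2 = p x3 ->
  col \in L x1 -> col \in L x2 -> col \in L x3 -> False.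
Proof.
move=> hu h12 h23 c1 c2 c3.
set D : {set T} := [set x1; x2; x3].
pose T' := {x : T | x \notin D}.
have hD : #|D| = 3.
  move: hu; rewrite /= !inE negb_or => /andP[/andP[n12 n13] /andP[n23 _]].
  by rewrite /D setUC cardsU1 cards2 !inE n12 (eq_sym x3 x1) (negbTE n13) (eq_sym x3 x2) (negbTE n23).
set m := #|{: T'}|.
have hm : m + 3 = n.
  rewrite /m card_sig -hT -hD.
  rewrite -(cardsC D) addnC; congr (_ + _); apply: eq_card => x; by rewrite !inE.
pose g (i : 'I_m) : T := val (enum_val i).
pose e : rel 'I_m := fun i j => p (g i) != p (g j).
have esym : symmetric e by move=> i j; rewrite /e eq_sym.
have eirr : irreflexive e by move=> i; rewrite /e eqxx.
have hchi : chi e <= k.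
  apply: chi_le; apply/existsP; exists [ffun i => p (g i)].
  by apply/forallP => i; apply/forallP => j; apply/implyP; rewrite !ffunE.
have hc : cdiv3 (n + k - 1) = (cdiv3 (m + k - 1)).+1.
  rewrite -cdiv3_3; congr cdiv3. lia.
have hck : k < cdiv3 (n + k - 1).
  have := cdiv3_ge (n + k - 1); have := cdiv3_ge (m + k - 1). lia.
have := hmin m e (ltac:(lia)) esym eirr C (fun i => L (g i) :\ col).
case.
  move=> i; have hLi := hL (g i); rewrite (cardsD1 col (L (g i))) in hLi; move: hLi.
  rewrite geq_max => hLi; apply/andP; split.
    move: hLi hck hchi; case: (col \in L (g i)) => /=; lia.
  have hle : m + chi e - 1 <= m + k - 1 by apply: leq_sub2r; rewrite leq_add2l.
  have := cdiv3_mono _ _ hle.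
  move: hLi hc; case: (col \in L (g i)) => /=; lia.
move=> f' [hf'1 hf'2].
apply: hnocol.
exists (fun x => if (insub x : option T') is Some x' then f' (enum_rank x') else col).
have pD : forall x, x \in D -> p x = p x1.
  by move=> x; rewrite !inE => /orP[/orP[]|] /eqP -> //; rewrite h12 ?h23.
split.
  move=> x; case: insubP => [x' _ <-|hx].
    by have := hf'1 (enum_rank x'); rewrite /g enum_rankK => /setD1P[].
  by move: hx; rewrite negbK !inE => /orP[/orP[]|] /eqP ->.
move=> x y; rewrite /kpart_rel.
case: insubP => [x' hx <-|hx]; case: insubP => [y' hy <-|hy] hxy.
- apply: hf'2; by rewrite /e /g !enum_rankK.
- by have := hf'1 (enum_rank x'); case/setD1P.
- by have := hf'1 (enum_rank y'); case/setD1P; rewrite eq_sym.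
- by move: hxy; rewrite negbK in hx; rewrite negbK in hy; rewrite (pD _ hx) (pD _ hy) eqxx.
Qed.


Lemma le2 (k : nat) (T : finType) (p : T -> 'I_k) (C : finType) (L : T -> {set C})
  (P3 : forall x1 x2 x3 col, uniq [:: x1; x2; x3] -> p x1 = p x2 -> p x2 = p x3 ->
        col \in L x1 -> col \in L x2 -> col \in L x3 -> False)
  (a : 'I_k) (col : C) : #|[set w in part p a | col \in L w]| <= 2.
Proof.
set X := [set w in part p a | col \in L w].
rewrite leqNgt; apply/negP => h3.
have /card_gt0P [x1 h1] : 0 < #|X| by lia.
have h3' : 2 <= #|X :\ x1| by move: h3; rewrite (cardsD1 x1) h1; lia.
have /card_gt0P [x2 h2] : 0 < #|X :\ x1| by lia.
have /card_gt0P [x3 h3''] : 0 < #|X :\ x1 :\ x2| by move: h3'; rewrite (cardsD1 x2 (X :\ x1)) h2; lia.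
move: h3'' h2 h1; rewrite !inE => /andP[n32 /andP[n31 /andP[/eqP p3 c3]]] /andP[n21 /andP[/eqP p2 c2]] /andP[/eqP p1 c1].
apply: (P3 x1 x2 x3 col) => //.
- by rewrite /= !inE negb_or eq_sym n21 eq_sym n31 eq_sym n32.
- by rewrite p1 p2.
- by rewrite p2 p3.
Qed.

Lemma sumL (k : nat) (T : finType) (p : T -> 'I_k) (C : finType) (L : T -> {set C})
  (P3 : forall x1 x2 x3 col, uniq [:: x1; x2; x3] -> p x1 = p x2 -> p x2 = p x3 ->
        col \in L x1 -> col \in L x2 -> col \in L x3 -> False)
  (a : 'I_k) : \sum_(w in part p a) #|L w| <= 2 * #|\bigcup_(v : T) L v|.
Proof.
have -> : \sum_(w in part p a) #|L w| = \sum_(w in part p a) \sum_(col : C) (col \in L w : nat).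
  apply: eq_bigr => w _; rewrite -sum1_card big_mkcond /=; apply: eq_bigr => col _.
  by case: (col \in L w).
rewrite exchange_big /= mulnC -sum_nat_const [X in _ <= X]big_mkcond /=.
apply: leq_sum => col _.
case: ifP => hU.
  apply: leq_trans _ (le2 _ _ _ _ _ P3 a col).
  rewrite -sum1_card [X in _ <= X]big_mkcond /= big_mkcond /=. apply: leq_sum => w _.
  by rewrite !inE; case: (p w == a); case: (col \in L w).
rewrite big1 // => w _.
case hc: (col \in L w) => //.
by move: hU; rewrite (_ : (col \in \bigcup_(v : T) L v) = true) //; apply/bigcupP; exists w.
Qed.

Lemma sum_parts (k : nat) (T : finType) (p : T -> 'I_k) : #|T| = \sum_(a < k) #|part p a|.
Proof.
rewrite -sum1_card (partition_big p predT) //=; apply: eq_bigr => a _.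
by rewrite -sum1_card; apply: eq_bigl => x; rewrite !inE.
Qed.

Lemma nparts_sum (k : nat) (T : finType) (p : T -> 'I_k) j :
  nparts p j = \sum_(a < k) (#|part p a| == j).
Proof.
rewrite /nparts -sum1_card big_mkcond /=; apply: eq_bigr => a _.
by rewrite !inE; case: (_ == j).
Qed.

Theorem lemma24
  (k n : nat) (T : finType) (p : T -> 'I_k) (C : finType) (L : T -> {set C})
  (hk : 1 <= k) (hn : 2 * k + 2 <= n) (hT : #|T| = n)
  (hsurj : forall a : 'I_k, exists x : T, p x = a)
  (hL : forall v, cdiv3 (n + k - 1) <= #|L v|)
  (hnocol : ~ exists f : T -> C, L_coloring (kpart_rel p) L f)
  (hunion : #|\bigcup_(v : T) L v| <= n - 1)
  (hmin : forall (m : nat) (e : rel 'I_m), m < n -> symmetric e -> irreflexive e ->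
            choosable e (maxn (chi e) (cdiv3 (m + chi e - 1))))
  (t : nat) (ht : nparts p 3 <= 3 * t)
  (a : 'I_k) (hA : #|part p a| = 4)
  (u v y z : T) (hu : p u = a) (hv : p v = a) (hy : p y = a) (hz : p z = a)
  (hdist : uniq [:: u; v; y; z])
  (hgood : #|L y :&: L z| <= #|L u :&: L v|) :
  n <= #|(L u :&: L v) :|: L y :|: L z| + t + nparts p 4.
Proof.
have P3 := @no_triple k n T p C L hk hn hT hL hnocol hmin.
set c := cdiv3 (n + k - 1).
have hc3 : n + k - 1 <= 3 * c := cdiv3_ge _.
have hsize : forall b, #|part p b| * c <= 2 * (n - 1).
  move=> b; apply: leq_trans _ (leq_mul (leqnn 2) hunion).
  apply: leq_trans _ (sumL _ _ _ _ _ P3 b); rewrite -sum_nat_const; exact: leq_sum.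
have h6 : forall b, #|part p b| <= 5.
  move=> b; rewrite leqNgt; apply/negP => h.
  have := leq_mul h (leqnn c); have := hsize b; lia.
have hn5 : n <= 5 * k.
  rewrite -hT (@sum_parts _ _ p) mulnC -[k in k * 5]card_ord -sum_nat_const.
  by apply: leq_sum => b _; apply: h6.
have h4 : forall b, #|part p b| <= 4.
  move=> b; have hs := hsize b; have := h6 b; rewrite leq_eqVlt => /orP[/eqP e|].
    rewrite e in hs; lia.
  by rewrite ltnS.
have hnk : n <= 2 * k + nparts p 3 + 2 * nparts p 4.
  rewrite !nparts_sum [2 * k]mulnC -[k in k * 2]card_ord -sum_nat_const !big_distrr -!big_split /=.
  rewrite -hT (@sum_parts _ _ p); apply: leq_sum => b _.
  have := h4 b; case: #|part p b| => [|[|[|[|[|]]]]] //.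
move: hdist; rewrite /= !inE !negb_or => /and4P[/and3P[nuv nuy nuz] /andP[nvy nvz] nyz _].
have hI : (L u :&: L v) :&: (L y :|: L z) = set0.
  apply/setP => col; rewrite !inE; apply/negP => /andP[/andP[cu cv] /orP[cy|cz]].
  - by apply: (P3 u v y col); rewrite /= ?inE ?negb_or ?nuv ?nuy ?nvy ?hu ?hv ?hy.
  - by apply: (P3 u v z col); rewrite /= ?inE ?negb_or ?nuv ?nuz ?nvz ?hu ?hv ?hz.
have hS : #|(L u :&: L v) :|: L y :|: L z| + #|L y :&: L z| = #|L u :&: L v| + #|L y| + #|L z|.
  rewrite -setUA cardsU hI cards0 subn0.
  have := cardsUI (L y) (L z); lia.
have := hL y; have := hL z; rewrite -/c.
lia.
Qed.
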